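(* Fix $\epsilon > 0$, integers $T_0$ and $T > T_0 + (\frac{1}{2} + 2\epsilon) n \log(n)$. For each $T_0 \le t < T$ let $(i_t, j_t)$ be chosen independently and uniformly at random among all pairs $1 \le i_t < j_t \le n$. Define partitions $\mathcal{P}_t$ of $\{1,\dots,n\}$ for $t = T, T-1, \dots, T_0$ backward in time: $\mathcal{P}_T = \{\{1\},\{2\},\dots,\{n\}\}$, and for $T_0 \le t < T$, if $i_t$ and $j_t$ lie in the same block of $\mathcal{P}_{t+1}$ then $\mathcal{P}_t = \mathcal{P}_{t+1}$, otherwise $\mathcal{P}_t$ is obtained from $\mathcal{P}_{t+1}$ by merging the block containing $i_t$ with the block containing $j_t$. Then for all $n > N_0(\epsilon)$ sufficiently large, $$\mathbb{P}\big[\mathcal{P}_{T_0} = \{\{1,2,\dots,n\}\}\big] \ge 1 - 2n^{-\epsilon},$$ i.e. with probability at least $1 - 2n^{-\epsilon}$ the partition $\mathcal{P}_{T_0}$ consists of the single block $\{1,\dots,n\}$. *)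

(* Defs.v *)
From mathcomp Require Import all_boot.
From Stdlib Require Import Reals ZArith.

Set Implicit Arguments.
Unset Strict Implicit.
Unset Printing Implicit Defensive.

(* Points {1,...,n} are represented by 'I_n = {0,...,n-1}. *)

Definition Pair (n : nat) := {p : 'I_n * 'I_n | (nat_of_ord p.1 < nat_of_ord p.2)%nat}.

Definition partn (n : nat) := {set {set 'I_n}}.

Definition singletons (n : nat) : partn n := [set [set i] | i : 'I_n].

Definition merge_step (n : nat) (e : Pair n) (P : partn n) : partn n :=
  let i := (sval e).1 in
  let j := (sval e).2 in
  if pblock P i == pblock P j then P
  else ((P :\ pblock P i) :\ pblock P j) :|: [set pblock P i :|: pblock P j].

(* For a sequence s of m = T - T0 pairs, s k = (i_{T0+k}, j_{T0+k}),
   part_at s k is the partition P_{T0+k} (0 <= k <= m), computed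
   backward from P_T = singletons. *)
Definition part_at (n m : nat) (s : {ffun 'I_m -> Pair n}) (k : nat) : partn n :=
  foldr (@merge_step n) (singletons n) (drop k [seq s t | t <- enum 'I_m]).

Definition prob_one_block (n m : nat) : R :=
  INR #|[set s : {ffun 'I_m -> Pair n} | part_at s 0 == [set [set: 'I_n]]]|
  / INR #|{ffun 'I_m -> Pair n}|.

(* Main.v *)
Require Import Defs.
From mathcomp Require Import all_boot.
From Stdlib Require Import Reals ZArith.
Module H.
From Stdlib Require Import Lra Lia.
From mathcomp Require Import all_boot zify.
Set Implicit Arguments. Unset Strict Implicit. Unset Printing Implicit Defensive.
Section Part.
Variable n : nat.
Implicit Types (P : {set {set 'I_n}}) (e : Pair n).

Definition einv P (l : seq (Pair n)) :=
  partition P [set: 'I_n] /\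
  forall e, e \in l -> pblock P (sval e).1 = pblock P (sval e).2.

Lemma singletons_part : partition (singletons n) [set: 'I_n].
Proof.
apply/and3P; split.
- apply/eqP/setP => x; rewrite inE; apply/bigcupP; exists [set x]; rewrite ?inE //.
  by apply/imsetP; exists x.
- apply/trivIsetP => A B /imsetP[x _ ->] /imsetP[y _ ->] Hne.
  rewrite disjoints_subset; apply/subsetP => z; rewrite !inE => /eqP ->.
  by apply: contra Hne => /eqP ->.
- by apply/imsetP => -[x _ /setP /(_ x)]; rewrite !inE eqxx.
Qed.

Lemma merge_part P e : partition P [set: 'I_n] ->
  partition (merge_step e P) [set: 'I_n] /\
  forall x, pblock (merge_step e P) x =
    if (pblock P x == pblock P (sval e).1) || (pblock P x == pblock P (sval e).2)
    then pblock P (sval e).1 :|: pblock P (sval e).2 else pblock P x.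
Proof.
move=> /and3P[/eqP cov tI n0].
set i := (sval e).1; set j := (sval e).2.
have inC x : x \in cover P by rewrite cov inE.
have xB x : x \in pblock P x by rewrite mem_pblock.
have BP x : pblock P x \in P by apply: pblock_mem.
have memB x B : B \in P -> (x \in B) = (pblock P x == B).
  move=> PB; apply/idP/eqP => [xB'|<-//]; exact: def_pblock.
rewrite /merge_step -/i -/j.
case: eqP => [Eij|Nij].
  split; first by apply/and3P; split => //; apply/eqP.
  move=> x; case: ifP => // /orP[] /eqP ->; rewrite Eij setUid //.
set Bi := pblock P i; set Bj := pblock P j.
set P' := _ :|: _.
have inP' C : (C \in P') = ((C \in P) && (C != Bi) && (C != Bj)) || (C == Bi :|: Bj).
  by rewrite /P' !inE; case: (C \in P); case: (C != Bi); case: (C != Bj).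
have disU C : C \in P -> C != Bi -> C != Bj -> [disjoint C & Bi :|: Bj].
  move=> PC H1 H2; rewrite disjoints_subset; apply/subsetP => x xC.
  have px : pblock P x = C by apply: def_pblock.
  by rewrite !inE (memB x Bi (BP i)) (memB x Bj (BP j)) px negb_or H1 H2.
have dis C D : C \in P -> D \in P -> C != D -> [disjoint C & D].
  by move/trivIsetP: tI; apply.
have tP' : trivIset P'.
  apply/trivIsetP => A B; rewrite !inP'.
  case/orP => [/andP[/andP[PA A1] A2]|/eqP->]; case/orP => [/andP[/andP[PB B1] B2]|/eqP->].
  - exact: dis.
  - by move=> _; apply: disU.
  - by move=> _; rewrite disjoint_sym; apply: disU.
  - by rewrite eqxx.
have inU x : (x \in Bi :|: Bj) = (pblock P x == Bi) || (pblock P x == Bj).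
  by rewrite inE (memB x Bi (BP i)) (memB x Bj (BP j)).
have key x : pblock P' x =
    if (pblock P x == Bi) || (pblock P x == Bj) then Bi :|: Bj else pblock P x.
  case: ifP => Hx; apply: def_pblock => //.
  - by rewrite inP' eqxx orbT.
  - by rewrite inU.
  - rewrite inP' BP /=; move/negbT: Hx; rewrite negb_or => /andP[-> ->] //.
split => //; apply/and3P; split => //.
- apply/eqP/setP => x; rewrite inE; apply/bigcupP; exists (pblock P' x); last first.
    rewrite key; case: ifP => Hx; [by rewrite inU|exact: xB].
  rewrite key; case: ifP => Hx; first by rewrite inP' eqxx orbT.
  rewrite inP' BP /=; move/negbT: Hx; rewrite negb_or => /andP[-> ->] //.
- rewrite inP' negb_or (negbTE n0) /=; apply/eqP => /setP/(_ i); rewrite !inE xB //.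
Qed.

Lemma part_inv (l : seq (Pair n)) : einv (foldr (@merge_step n) (singletons n) l) l.
Proof.
elim: l => [|e l [Hp He]] /=; first by split; [exact: singletons_part|].
have [Hp' Hb] := merge_part e Hp.
split => // e'; rewrite inE => /orP[/eqP->|He'].
  rewrite !Hb !eqxx /=.
  by case: ifP => //; rewrite orbT.
by rewrite !Hb (He _ He').
Qed.
End Part.

Lemma exists_cut n (x0 : 'I_n) (l : seq (Pair n)) :
  foldr (@merge_step n) (singletons n) l != [set [set: 'I_n]] ->
  exists S : {set 'I_n}, [/\ 0 < #|S|, #|S| < n &
     forall e, e \in l -> ((sval e).1 \in S) = ((sval e).2 \in S)].
Proof.
have [/and3P[/eqP cov tI n0] He] := part_inv l.
set P := foldr _ _ _ => HP.
have inC x : x \in cover P by rewrite cov inE.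
have xB x : x \in pblock P x by rewrite mem_pblock.
have BP x : pblock P x \in P by apply: pblock_mem.
have memB x B : B \in P -> (x \in B) = (pblock P x == B).
  move=> PB; apply/idP/eqP => [xB'|<-//]; exact: def_pblock.
exists (pblock P x0); split.
- by apply/card_gt0P; exists x0.
- suff H : #|pblock P x0| < #|[set: 'I_n]| by rewrite cardsT card_ord in H.
  apply: proper_card; rewrite properT.
  apply: contra HP => /eqP HB; apply/eqP/setP => C; rewrite inE.
  apply/idP/eqP => [PC|->]; last by rewrite -HB.
  have : C != set0 by apply: contraNneq n0 => <-.
  case/set0Pn => y yC.
  by rewrite -(def_pblock tI PC yC) -HB; apply: def_pblock => //; rewrite HB inE.
- by move=> e /He; rewrite !(memB _ _ (BP x0)) => ->.
Qed.

Lemma exists_cut2 n (x0 : 'I_n) (l : seq (Pair n)) :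
  foldr (@merge_step n) (singletons n) l != [set [set: 'I_n]] ->
  exists S : {set 'I_n}, [/\ 0 < #|S|, 2 * #|S| <= n &
     forall e, e \in l -> ((sval e).1 \in S) = ((sval e).2 \in S)].
Proof.
move=> /(exists_cut x0) [S [S0 Sn HS]].
have cS := cardsC S; rewrite card_ord in cS.
case: (leqP (2 * #|S|) n) => H.
  by exists S.
exists (~: S); split.
- lia.
- lia.
- by move=> e /HS; rewrite !inE => ->.
Qed.
Lemma card_bigcup_le (I T : finType) (r : seq I) (Pr : pred I) (F : I -> {set T}) :
  #|\bigcup_(i <- r | Pr i) F i| <= \sum_(i <- r | Pr i) #|F i|.
Proof.
elim/big_rec2: _ => [|i A s _ H]; first by rewrite cards0.
by apply: leq_trans (leq_card_setU _ _) _; rewrite leq_add2l.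
Qed.

Lemma expn_mono a b e : a <= b -> a ^ e <= b ^ e.
Proof. by move=> H; elim: e => [|e IH]; rewrite ?expn0 // !expnS leq_mul. Qed.

Section Count.
Variable n : nat.

Definition noncross (S : {set 'I_n}) := [set p : Pair n | ((sval p).1 \in S) == ((sval p).2 \in S)].

Lemma card_E m S :
  #|[set s : {ffun 'I_m -> Pair n} | [forall t, s t \in noncross S]]| = #|noncross S| ^ m.
Proof.
rewrite -[m in RHS]card_ord -card_ffun_on cardsE; apply: eq_card => s.
rewrite inE; apply/forallP/ffun_onP => //.
Qed.

Definition sortp (u : 'I_n * 'I_n) := if u.1 < u.2 then u else (u.2, u.1).

Lemma card_noncross (p0 : Pair n) S : #|noncross S| + #|S| * (n - #|S|) <= #|{: Pair n}|.
Proof.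
pose h u : Pair n := odflt p0 (insub (sortp u)).
have hval u : u.1 != u.2 -> sval (h u) = sortp u.
  move=> Hne; rewrite /h insubT //= /sortp; case: ifP => //= /negbT.
  rewrite -leqNgt leq_eqVlt => /orP[/eqP E|//]; by move: Hne; rewrite (val_inj E) eqxx.
have inj : {in setX S (~: S) &, injective h}.
  move=> [u1 u2] [v1 v2]; rewrite !inE /= => /andP[U1 U2] /andP[V1 V2] Huv.
  have neu : u1 != u2 by apply: contraNneq U2 => <-.
  have nev : v1 != v2 by apply: contraNneq V2 => <-.
  have := congr1 sval Huv; rewrite (hval (u1,u2) neu) (hval (v1,v2) nev) /sortp /=.
  case: ifP => _; case: ifP => _ [E1 E2]; try by rewrite E1 E2.
  - by rewrite E1 in U1; rewrite U1 in V2.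
  - by rewrite E2 in U1; rewrite U1 in V2.
have sub : h @: setX S (~: S) \subset ~: noncross S.
  apply/subsetP => p /imsetP[[w1 w2]]; rewrite !inE /= => /andP[W1 W2] ->.
  have neu : w1 != w2 by apply: contraNneq W2 => <-.
  rewrite (hval (w1,w2) neu) /sortp /=; case: ifP => _ /=; rewrite W1 (negbTE W2) //.
have := subset_leq_card sub; rewrite card_in_imset // cardsX.
have := cardsC S; rewrite card_ord => cS.
have := cardsC (noncross S) => cN.
move=> H; rewrite -cN leq_add2l; apply: leq_trans H; rewrite leq_mul2l; apply/orP; right.
by rewrite leq_subLR cS.
Qed.

Lemma card_Pair : 2 * #|{: Pair n}| <= n * n.
Proof.
rewrite card_sig.
pose A := [set u : 'I_n * 'I_n | u.1 < u.2].
pose sw (u : 'I_n * 'I_n) := (u.2, u.1).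
have swK : cancel sw sw by case.
have -> : #|[pred x : 'I_n * 'I_n | x.1 < x.2]| = #|A| by rewrite cardsE.
have cB : #|sw @: A| = #|A| by rewrite card_imset //; apply: can_inj swK.
have dis : A :&: sw @: A = set0.
  apply/setP => u; rewrite !inE; apply/negbTE; apply/andP => -[H1 /imsetP[v]].
  rewrite inE => H2 E; move: H1; rewrite E /= => H1; lia.
have := cardsUI A (sw @: A); rewrite dis cards0 addn0 cB => E.
have := max_card (A :|: sw @: A); rewrite card_prod card_ord E; lia.
Qed.

End Count.

Lemma bad_bound n m (x0 : 'I_n) (p0 : Pair n) :
  #|[set s : {ffun 'I_m -> Pair n} | part_at s 0 != [set [set: 'I_n]]]| <=
  \sum_(k < n.+1 | (0 < k) && (2 * k <= n)) 'C(n, k) * (#|{: Pair n}| - k * (n - k)) ^ m.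
Proof.
set E := fun S : {set 'I_n} =>
  [set s : {ffun 'I_m -> Pair n} | [forall t, s t \in noncross S]].
have sub : [set s : {ffun 'I_m -> Pair n} | part_at s 0 != [set [set: 'I_n]]] \subset
   \bigcup_(k < n.+1 | (0 < k) && (2 * k <= n)) \bigcup_(S in [set S : {set 'I_n} | #|S| == k]) E S.
  apply/subsetP => s; rewrite inE /part_at drop0 => /(exists_cut2 x0) [S [S0 S2 HS]].
  have Sn : #|S| < n.+1 by rewrite ltnS; apply: leq_trans S2; rewrite leq_pmull.
  apply/bigcupP; exists (Ordinal Sn); first by rewrite /= S0 S2.
  apply/bigcupP; exists S; first by rewrite inE.
  rewrite inE; apply/forallP => t; rewrite inE; apply/eqP; apply: HS.
  by apply: map_f; rewrite mem_enum.
apply: leq_trans (subset_leq_card sub) _.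
apply: leq_trans (card_bigcup_le _ _ _) _.
apply: leq_sum => k /andP[k0 k2].
apply: leq_trans (card_bigcup_le _ _ _) _.
have cd : 'C(n, k) = #|[set S : {set 'I_n} | #|S| == k]| by rewrite card_draws card_ord.
rewrite cd -sum_nat_const.
apply: leq_sum => S; rewrite inE => /eqP Sk.
rewrite /E card_E; apply: expn_mono.
have := card_noncross p0 S; rewrite Sk; lia.
Qed.
Lemma bin_le_2exp n k : 'C(n, k) <= 2 ^ n.
Proof.
elim: n k => [|n IH] [|k] //; first by rewrite bin0 expn_gt0.
by rewrite binS expnS mul2n -addnn leq_add.
Qed.

Lemma bin_le_exp n k : 'C(n, k) <= n ^ k.
Proof.
apply: leq_trans (_ : n ^_ k <= _); first by rewrite -bin_ffact leq_pmulr // fact_gt0.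
elim: k => [|k IH] //; rewrite ffactnSr expnSr; apply: leq_mul => //; apply: leq_subr.
Qed.

Local Open Scope R_scope.

Lemma expR_le x y : x <= y -> exp x <= exp y.
Proof. move=> [H|->]; [left; exact: exp_increasing|right; reflexivity]. Qed.

Lemma exp_pow' x k : exp x ^ k = exp (INR k * x).
Proof.
elim: k => [|k IH]; first by rewrite /= Rmult_0_l exp_0.
by rewrite -tech_pow_Rmult IH S_INR -exp_plus; f_equal; ring.
Qed.

Lemma INR_leq (a b : nat) : (a <= b)%N -> INR a <= INR b.
Proof. by move/leP; apply: le_INR. Qed.

Lemma INR_expn (a m : nat) : INR (a ^ m)%N = INR a ^ m.
Proof. by elim: m => [|m IH] //; rewrite expnS mult_INR IH. Qed.

Lemma term_bound (n m k b c Pn : nat) (e : R) :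
  0 < e -> (2 <= n)%N -> (1 <= k)%N -> (2 * k <= n)%N -> (c + k * (n - k) <= Pn)%N ->
  (2 * Pn <= n * n)%N -> (b <= n ^ k)%N -> (b <= 2 ^ n)%N ->
  (1 + 4 * e) / 2 * INR n * ln (INR n) < INR m ->
  (4 * ln 2 + 1) / e <= ln (INR n) -> e + 1 <= e * INR n / 4 ->
  INR (b * c ^ m) <= INR (Pn ^ m) *
     (exp (- (3 * e * ln (INR n))) ^ k + exp (- (e * ln (INR n))) / INR n).
Proof.
move=> He Hn Hk H2k Hc HP Hb1 Hb2 Hm HL1 HL2.
set L := ln (INR n) in Hm HL1 *.
set a := 1 + 4 * e.
have nR : 2 <= INR n by apply: (INR_leq Hn).
have kR : 1 <= INR k by apply: (INR_leq Hk).
have k2R : 2 * INR k <= INR n by have := INR_leq H2k; rewrite mult_INR.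
have ln2 := ln_lt_2.
have L0 : 0 < L.
  rewrite /L -ln_1; apply: ln_increasing; lra.
have eL : 4 * ln 2 + 1 <= e * L.
  have := Rmult_le_compat_l e _ _ (Rlt_le _ _ He) HL1.
  by rewrite /Rdiv (Rmult_comm (4 * ln 2 + 1)) -Rmult_assoc Rinv_r ?Rmult_1_l; lra.
have Hkn : (k <= n)%N by apply: leq_trans H2k; rewrite leq_pmull.
set K := INR k * (INR n - INR k).
have KR : INR (k * (n - k)) = K by rewrite mult_INR minus_INR //; apply/leP.
have K1 : INR k * INR k <= K by rewrite /K; nra.
have K0 : 0 < K by nra.
have cPR : INR c + K <= INR Pn by rewrite -KR -plus_INR; apply: INR_leq.
have PnR : 2 * INR Pn <= INR n * INR n.
  have := INR_leq HP; rewrite !mult_INR /=; lra.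
have P0 : 0 < INR Pn by have := pos_INR c; lra.
have c0 := pos_INR c.
set x := K / INR Pn.
have cx : INR c <= INR Pn * (1 - x).
  have -> : INR Pn * (1 - x) = INR Pn - K by rewrite /x; field; lra.
  lra.
have x1 : 0 <= 1 - x.
  case: (Rle_lt_dec 0 (1 - x)) => // h; nra.
have m0 : 0 <= INR m by apply: pos_INR.
set y := a * K * L / INR n.
have mx : y <= INR m * x.
  set t := 2 * K / (INR n * INR n).
  have t0 : 0 <= t.
    rewrite /t; apply: Rmult_le_pos; first lra.
    apply: Rlt_le; apply: Rinv_0_lt_compat; nra.
  have xt : t <= x.
    have -> : x = t + K * (INR n * INR n - 2 * INR Pn) / (INR Pn * (INR n * INR n)).
      rewrite /x /t; field; split; lra.
    have : 0 <= K * (INR n * INR n - 2 * INR Pn) / (INR Pn * (INR n * INR n)).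
      apply: Rmult_le_pos; first nra.
      apply: Rlt_le; apply: Rinv_0_lt_compat; nra.
    lra.
  have ty : (1 + 4 * e) / 2 * INR n * L * t = y by rewrite /t /y /a; field; lra.
  nra.
have key : INR (b * c ^ m) <= INR (Pn ^ m) * (INR b * exp (- y)).
  rewrite mult_INR !INR_expn.
  apply: (Rle_trans _ (INR b * (INR Pn * (1 - x)) ^ m)).
    apply: Rmult_le_compat_l; first exact: pos_INR.
    by apply: pow_incr; split.
  rewrite Rpow_mult_distr.
  have : (1 - x) ^ m <= exp (- y).
    apply: (Rle_trans _ (exp (- x) ^ m)).
      apply: pow_incr; split; first exact: x1.
      have := exp_ineq1_le (- x); lra.
    rewrite exp_pow'; apply: expR_le; nra.
  move=> H; rewrite -Rmult_assoc (Rmult_comm (INR b)) Rmult_assoc.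
  apply: Rmult_le_compat_l; first by apply: pow_le; lra.
  by apply: Rmult_le_compat_l => //; apply: pos_INR.
apply: Rle_trans key _.
apply: Rmult_le_compat_l; first by rewrite INR_expn; apply: pow_le; apply: pos_INR.
have E1 : 0 <= exp (- (3 * e * L)) ^ k by apply: pow_le; apply: Rlt_le; apply: exp_pos.
have E2 : 0 <= exp (- (e * L)) / INR n by apply: Rlt_le; apply: Rdiv_lt_0_compat; [apply: exp_pos|lra].
case: (Rle_lt_dec (a * INR k) (e * INR n)) => Hak.
- suff : INR b * exp (- y) <= exp (- (3 * e * L)) ^ k by lra.
  have bn : INR b <= exp (INR k * L).
    rewrite -exp_pow' /L exp_ln; last lra.
    by rewrite -INR_expn; apply: INR_leq.
  rewrite exp_pow'.
  apply: (Rle_trans _ (exp (INR k * L) * exp (- y))).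
    apply: Rmult_le_compat_r; [apply: Rlt_le; apply: exp_pos|exact: bn].
  rewrite -exp_plus; apply: expR_le.
  have -> : INR k * L + - y = INR k * (- (3 * e * L)) + INR k * L * (a * INR k - e * INR n) / INR n.
    rewrite /y /K /a; field; lra.
  have : INR k * L * (a * INR k - e * INR n) / INR n <= 0.
    have kL0 : 0 <= INR k * L by nra.
    have p1 : INR k * L * (a * INR k - e * INR n) <= 0 by nra.
    have i0 : 0 <= / INR n by apply: Rlt_le; apply: Rinv_0_lt_compat; lra.
    have := Rmult_le_compat_r _ _ _ i0 p1; rewrite Rmult_0_l //.
  lra.
- suff : INR b * exp (- y) <= exp (- (e * L)) / INR n by lra.
  have bn : INR b <= exp (INR n * ln 2).
    rewrite -exp_pow' exp_ln; last lra.
    have := INR_leq Hb2; rewrite INR_expn /=.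
    by have -> : 1 + 1 = 2 by ring.
  apply: (Rle_trans _ (exp (INR n * ln 2) * exp (- y))).
    apply: Rmult_le_compat_r; [apply: Rlt_le; apply: exp_pos|exact: bn].
  have -> : exp (- (e * L)) / INR n = exp (- (e * L) + - L).
    rewrite /L exp_plus (exp_Ropp (ln (INR n))) exp_ln; [reflexivity|lra].
  rewrite -exp_plus; apply: expR_le.
  have yk : a * INR k * L / 2 <= y.
    have -> : y = a * INR k * L / 2 + a * INR k * L * (INR n - 2 * INR k) / (2 * INR n).
      rewrite /y /K; field; lra.
    have : 0 <= a * INR k * L * (INR n - 2 * INR k) / (2 * INR n).
      rewrite /Rdiv; apply: Rmult_le_pos.
        apply: Rmult_le_pos; last lra.
        apply: Rmult_le_pos; last lra.
        apply: Rmult_le_pos; rewrite /a; lra.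
      apply: Rlt_le; apply: Rinv_0_lt_compat; lra.
    lra.
  have h1 : e * INR n * L <= a * INR k * L by apply: Rmult_le_compat_r; lra.
  have h2 : INR n * (4 * ln 2) <= INR n * (e * L) by apply: Rmult_le_compat_l; lra.
  have h3 : (e + 1) * L <= (e * INR n / 4) * L by apply: Rmult_le_compat_r; lra.
  nra.
Qed.
Fixpoint rsum (G : nat -> R) (K : nat) : R :=
  match K with O => 0 | S K => rsum G K + G K end.

Lemma sum_INR_le (f : nat -> nat) (Pr : pred nat) (G : nat -> R) K :
  (forall k, (k < K)%N -> INR (if Pr k then f k else 0%N) <= G k) ->
  INR (\sum_(k < K | Pr k) f k) <= rsum G K.
Proof.
rewrite big_mkcond; elim: K => [|K IH] H; first by rewrite big_ord0 /=; lra.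
rewrite big_ord_recr plus_INR /=; apply: Rplus_le_compat.
  by apply: IH => k Hk; apply: H; apply: ltnW.
exact: H.
Qed.

Lemma rsum_scal D g K : rsum (fun k => D * g k) K = D * rsum g K.
Proof. elim: K => [|K IH] /=; [ring|rewrite IH; ring]. Qed.

Lemma rsum_geo r c K : 0 <= r -> 2 * r <= 1 -> 0 <= c ->
  rsum (fun k => if (0 < k)%N then r ^ k + c else 0) K.+1 <= 2 * r - 2 * r ^ K.+1 + INR K * c.
Proof.
move=> r0 r1 c0; elim: K => [|K IH].
  rewrite /=; lra.
set g := fun k => _.
have -> : rsum g K.+2 = rsum g K.+1 + (r ^ K.+1 + c) by [].
have p := pow_le r K.+1 r0.
have e : r ^ K.+2 = r * r ^ K.+1 by [].
have q : 2 * r * r ^ K.+1 <= r ^ K.+1 by nra.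
rewrite e S_INR; move: IH; rewrite -/g; lra.
Qed.

Lemma main (eps : R) (Heps : (0 < eps)) :
  exists N0 : nat, forall (n : nat) (T0 T : Z),
    (N0 < n)%nat ->
    (IZR T > IZR T0 + (1/2 + 2 * eps) * INR n * ln (INR n)) ->
    (prob_one_block n (Z.to_nat (T - T0)) >= 1 - 2 * Rpower (INR n) (- eps)).
Proof.
have ln2 := ln_lt_2.
set X := (exp ((4 * ln 2 + 1) / eps) + 4 * (eps + 1) / eps + 2).
have X0 : (0 < exp ((4 * ln 2 + 1) / eps)) by apply: exp_pos.
have X1 : (0 <= 4 * (eps + 1) / eps).
  apply: Rlt_le; apply: Rdiv_lt_0_compat; lra.
have X2 : 0 < X by rewrite /X; lra.
have [hup _] := archimed X.
have upX : (0 <= up X)%Z by apply: le_IZR; lra.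
exists (Z.to_nat (up X)) => n T0 T HN HT.
have nX : (X < INR n).
  have := lt_INR _ _ (elimT ltP HN).
  rewrite INR_IZR_INZ Z2Nat.id //; lra.
have nX' : exp ((4 * ln 2 + 1) / eps) + 4 * (eps + 1) / eps + 2 < INR n by [].
have n2 : (2 <= n)%N.
  apply/leP; apply: INR_le; rewrite /=; lra.
set L := ln (INR n).
have HL1 : ((4 * ln 2 + 1) / eps <= L).
  rewrite -[X in (X <= _)]ln_exp; apply: Rlt_le; apply: ln_increasing => //; lra.
have HL2 : (eps + 1 <= eps * INR n / 4).
  have : (4 * (eps + 1) / eps <= INR n) by lra.
  move=> h; have := Rmult_le_compat_l eps _ _ (Rlt_le _ _ Heps) h.
  have -> : (eps * (4 * (eps + 1) / eps) = 4 * (eps + 1)) by field; lra.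
  lra.
have HT' : IZR T > IZR T0 + (1 / 2 + 2 * eps) * INR n * L by exact: HT.
have L0 : (0 < L) by rewrite /L -ln_1; apply: ln_increasing; lra.
set m := Z.to_nat (T - T0).
have Hm : ((1 + 4 * eps) / 2 * INR n * L < INR m).
  have nL : (0 <= (1 / 2 + 2 * eps) * INR n * L).
    apply: Rmult_le_pos; last lra. apply: Rmult_le_pos; lra.
  have TT : (0 <= T - T0)%Z by apply: le_IZR; rewrite minus_IZR; lra.
  rewrite /m (INR_IZR_INZ (Z.to_nat _)) Z2Nat.id // minus_IZR.
  have -> : ((1 + 4 * eps) / 2 = 1 / 2 + 2 * eps) by field.
  lra.
have m0 : (0 < m)%N.
  apply/ltP; apply: INR_lt; rewrite /=.
  have : (0 <= (1 + 4 * eps) / 2 * INR n * L).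
    apply: Rmult_le_pos; last lra. apply: Rmult_le_pos; lra.
  lra.
have n0 : (0 < n)%N by apply: leq_trans n2.
have n1 : (1 < n)%N by [].
pose x0 : 'I_n := Ordinal n0.
pose p0 : Pair n := exist _ (Ordinal n0, Ordinal n1) (ltnSn 0).
set Pn := #|{: Pair n}|.
set D := #|{ffun 'I_m -> Pair n}|.
have DP : D = (Pn ^ m)%N by rewrite /D card_ffun card_ord.
set G := [set s : {ffun 'I_m -> Pair n} | part_at s 0 == [set [set: 'I_n]]].
set B := [set s : {ffun 'I_m -> Pair n} | part_at s 0 != [set [set: 'I_n]]].
have GB : (#|G| + #|B|)%N = D.
  have -> : B = ~: G by apply/setP => s; rewrite !inE.
  exact: cardsC.
set r := exp (- (3 * eps * L)).
set c := (exp (- (eps * L)) / INR n).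
have nR : (2 <= INR n) by apply: (INR_leq n2).
have c0 : (0 <= c) by apply: Rlt_le; apply: Rdiv_lt_0_compat; [apply: exp_pos|lra].
have r0 : (0 <= r) by apply: Rlt_le; apply: exp_pos.
have eL : (1 <= eps * L).
  have := Rmult_le_compat_l eps _ _ (Rlt_le _ _ Heps) HL1.
  have -> : (eps * ((4 * ln 2 + 1) / eps) = 4 * ln 2 + 1) by field; lra.
  lra.
have rE : (2 * r <= exp (- (eps * L))).
  have -> : exp (- (eps * L)) = (r * exp (2 * eps * L)).
    by rewrite /r -exp_plus; f_equal; ring.
  have := exp_ineq1_le (2 * eps * L); nra.
have E1 : (exp (- (eps * L)) <= 1) by rewrite -exp_0; apply: expR_le; lra.
have D0 : (0 < INR D).
  rewrite DP INR_expn; apply: pow_lt.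
  have := card_noncross p0 set0; rewrite cards0 mul0n addn0 => h.
  apply: lt_0_INR; apply/ltP; apply: leq_trans h.
  by apply/card_gt0P; exists p0; rewrite inE !inE.
have HB : (INR #|B| <= INR D * (2 * exp (- (eps * L)))).
  apply: Rle_trans (INR_leq (bad_bound m x0 p0)) _.
  apply: (Rle_trans _ (rsum (fun k => INR D * (if (0 < k)%N then r ^ k + c else 0)) n.+1)).
    apply: (@sum_INR_le (fun k => 'C(n, k) * (Pn - k * (n - k)) ^ m)%N (fun k => (0 < k) && (2 * k <= n))%N) => k Hk; case: ifP => [/andP[k0 k2]|_]; last first.
      rewrite /=; apply: Rmult_le_pos; first lra.
      case: ifP => _; last lra. have := pow_le r k r0; lra.
    rewrite k0 -/Pn DP.
    case: (leqP (k * (n - k)) Pn) => hk.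
      apply: term_bound => //.
      - by rewrite subnK.
      - apply: card_Pair.
      - exact: bin_le_exp.
      - exact: bin_le_2exp.
    have -> : (Pn - k * (n - k))%N = 0%N by apply/eqP; rewrite subn_eq0 ltnW.
    rewrite exp0n // muln0 /=; apply: Rmult_le_pos.
      by rewrite INR_expn; apply: pow_le; apply: pos_INR.
    have := pow_le r k r0; lra.
  rewrite rsum_scal; apply: Rmult_le_compat_l; first lra.
  apply: Rle_trans (rsum_geo n r0 _ c0) _; first lra.
  have : (INR n * c = exp (- (eps * L))) by rewrite /c; field; lra.
  have := pow_le r n.+1 r0; lra.
rewrite /prob_one_block -/G -/D -/m.
have -> : INR #|G| = (INR D - INR #|B|) by rewrite -GB plus_INR; ring.
have -> : Rpower (INR n) (- eps) = exp (- (eps * L)) by rewrite /Rpower /L; f_equal; ring.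
apply: Rle_ge.
have -> : ((INR D - INR #|B|) / INR D = 1 - INR #|B| / INR D) by field; lra.
suff : (INR #|B| / INR D <= 2 * exp (- (eps * L))) by lra.
apply: (Rmult_le_reg_r (INR D)) => //.
rewrite /Rdiv Rmult_assoc Rinv_l; lra.
Qed.
End H.

Theorem lemma4p3 (eps : R) (Heps : (0 < eps)%R) :
  exists N0 : nat, forall (n : nat) (T0 T : Z),
    (N0 < n)%nat ->
    (IZR T > IZR T0 + (1/2 + 2 * eps)%R * INR n * ln (INR n))%R ->
    (prob_one_block n (Z.to_nat (T - T0)) >= 1 - 2 * Rpower (INR n) (- eps)%R)%R.
Proof. exact: H.main. Qed.
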